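(* Let $m>1$ and $a\in\mathbb{Z}_m$ with $2a^2-2a+1\equiv0\pmod m$. Then the quadratical quasigroup $(\mathbb{Z}_m,\cdot)$, $x\cdot y=ax+(1-a)y$, is not isomorphic to its dual $(\mathbb{Z}_m,\circ)$, $x\circ y=(1-a)x+ay$; i.e. no quadratical quasigroup induced by $\mathbb{Z}_m$ is self-dual.
   Context: The dual of a groupoid $(Q,\cdot)$ is $(Q,* )$ with $x*y=y\cdot x$; a groupoid is self-dual if it is isomorphic to its dual. Every quadratical quasigroup induced by the additive group $\mathbb{Z}_m$ has the form $x\cdot y=ax+(1-a)y$ with $2a^2-2a+1\equiv0\pmod m$. *)

(* Defs.v *)
From mathcomp Require Import all_boot all_algebra.
Set Implicit Arguments. Unset Strict Implicit. Unset Printing Implicit Defensive.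
Import GRing.Theory.
Local Open Scope ring_scope.

Definition dual_op (T : Type) (op : T -> T -> T) : T -> T -> T :=
  fun x y => op y x.

Definition groupoid_iso (T U : Type) (op1 : T -> T -> T) (op2 : U -> U -> U)
  (f : T -> U) : Prop :=
  bijective f /\ forall x y, f (op1 x y) = op2 (f x) (f y).

Definition groupoid_isomorphic (T U : Type) (op1 : T -> T -> T)
  (op2 : U -> U -> U) : Prop := exists f : T -> U, groupoid_iso op1 op2 f.

Definition self_dual (T : Type) (op : T -> T -> T) : Prop :=
  groupoid_isomorphic op (dual_op op).

Definition zm_quad_op (m : nat) (a : 'Z_m) : 'Z_m -> 'Z_m -> 'Z_m :=
  fun x y => a * x + (1 - a) * y.

(* Main.v *)
Require Import Defs.
From mathcomp Require Import all_boot all_algebra.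
From mathcomp Require Import ring.
Import GRing.Theory.
Local Open Scope ring_scope.

Theorem corollary9p5 (m : nat) (a : 'Z_m) :
  (1 < m)%N ->
  2 * a ^+ 2 - 2 * a + 1 = 0 ->
  ~ self_dual (zm_quad_op a).
Proof.
move=> hm ha [f [fbij fhom]].
pose b := 1 - a.
pose g := fun x => f x - f 0.
have hg : forall x y, g (a*x + b*y) = b * g x + a * g y.
  move=> x y; rewrite /g /b.
  have := fhom x y; rewrite /zm_quad_op /dual_op => ->; ring.
have g0 : g 0 = 0 by rewrite /g subrr.
have ga : forall x, g (a*x) = b * g x.
  by move=> x; have := hg x 0; rewrite mulr0 addr0 g0 mulr0 addr0.
have gb : forall y, g (b*y) = a * g y.
  by move=> y; have := hg 0 y; rewrite mulr0 add0r g0 mulr0 add0r.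
have hA : a * (2 - 2 * a) = 1.
  by rewrite -[RHS]subr0 -ha; ring.
have hB : b * (2 - 2 * b) = 1.
  by rewrite -[RHS]subr0 -ha /b; ring.
have gadd : forall u v, g (u + v) = g u + g v.
  move=> u v.
  have -> : u + v = a * ((2 - 2*a) * u) + b * ((2 - 2*b) * v)
    by rewrite !mulrA hA hB !mul1r.
  rewrite hg -ga -gb !mulrA hA hB !mul1r //.
have gn : forall k : nat, g k%:R = k%:R * g 1.
  elim=> [|k IH]; first by rewrite g0 mul0r.
  by rewrite mulrS gadd IH mulrDl mul1r.
have gx : forall x : 'Z_m, g x = x * g 1.
  by move=> x; rewrite -(natr_Zp x) gn.
have e1 : (2 * a - 1) * g 1 = 0.
  have := ga 1; rewrite mulr1 gx /b => h.
  have -> : (2 * a - 1) * g 1 = a * g 1 - (1 - a) * g 1 by ring.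
  by rewrite h subrr.
have e2 : (2 * a - 1) * (2 * a - 1) = -1.
  have -> : (2 * a - 1) * (2 * a - 1) = -1 + 2 * (2 * a ^+ 2 - 2 * a + 1) by ring.
  by rewrite ha mulr0 addr0.
have g1 : g 1 = 0.
  have : (2 * a - 1) * ((2 * a - 1) * g 1) = 0 by rewrite e1 mulr0.
  by rewrite mulrA e2 mulN1r => /eqP; rewrite oppr_eq0 => /eqP.
have : f 1 = f 0 by apply/eqP; rewrite -subr_eq0; apply/eqP.
move/(bij_inj fbij)/eqP; by rewrite oner_eq0.
Qed.
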